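(* Let $U,V\in\mathbb{R}_{\max}^{m\times n}$, $b,d\in\mathbb{R}_{\max}^m$, $p\in\mathbb{R}_{\max}^n$, $q\in(\mathbb{R}\cup\{+\infty\})^n$, and let $A$ and $B(\lambda)$ be the $(m+n+1)\times(n+1)$ matrices $$A=\begin{pmatrix} U & b\\ -\infty & p\\ q^- & -\infty\end{pmatrix},\qquad B(\lambda)=\begin{pmatrix} V & d\\ \lambda\otimes I & -\infty\\ -\infty & \lambda\end{pmatrix},\qquad \lambda\in\mathbb{R}.$$ Let $\mathcal{S}$ be the set of positional strategies of player Max and $\mathcal{T}$ the set of positional strategies of player Min. Then for every $\lambda\in\mathbb{R}$, $$\min_{\tau\in\mathcal{T}}\Phi_\tau(\lambda)=\Phi(\lambda)=\max_{\sigma\in\mathcal{S}}\Phi^{\sigma}(\lambda).$$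
   Context: Max-plus notation: $\mathbb{R}_{\max}=\mathbb{R}\cup\{-\infty\}$ with $a\oplus b=\max(a,b)$, $a\otimes b=a+b$, extended to matrices by $(A\oplus B)_{ij}=a_{ij}\oplus b_{ij}$ and $(A\otimes B)_{ij}=\max_k(a_{ik}+b_{kj})$. $I$ is the identity matrix (zeros on the diagonal, $-\infty$ off it). The conjugate $a^-$ of $a\in\mathbb{R}\cup\{\pm\infty\}$ is $-a$ if $a\in\mathbb{R}$, $+\infty$ if $a=-\infty$, $-\infty$ if $a=+\infty$; for a column vector $q$, $q^-$ is the row vector $(q_i^-)$. In $A$, the block ''$-\infty$'' in the second block row is the $n\times n$ all-$(-\infty)$ matrix, the last row is $(q^-,\,-\infty)$; in $B(\lambda)$, $\lambda\otimes I$ is the $n\times n$ matrix with $\lambda$ on the diagonal and $-\infty$ elsewhere, and the last row is $(-\infty,\dots,-\infty,\lambda)$. For matrices $A=(a_{ij}),B=(b_{ij})$ over $\mathbb{R}_{\max}$ of size $M\times N$, $A^{\sharp}B$ denotes the min-max map $f:\mathbb{R}^N\to\mathbb{R}^N$, $f_j(x)=\min_{k:\,a_{kj}\neq-\infty}\big(-a_{kj}+\max_{l:\,b_{kl}\neq -\infty}(b_{kl}+x_l)\big)$, and its cycle-time vector is $\chi(A^\sharp B)=\lim_{k\to\infty} f^k(0)/k$ (which exists). Standing assumption (needed for these objects to be defined): every column of $A$ and every row of $B(\lambda)$ contains a finite entry. A positional strategy of Max is a map $\sigma:\{1,\dots,m+n+1\}\to\{1,\dots,n+1\}$ with $B(\lambda)_{i\sigma(i)}\neq-\infty$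 for all $i$; a positional strategy of Min is a map $\tau:\{1,\dots,n+1\}\to\{1,\dots,m+n+1\}$ with $a_{\tau(j)j}\neq-\infty$ for all $j$. Define $A_\tau$ by $(A_\tau)_{ij}=a_{ij}$ if $i=\tau(j)$ and $-\infty$ otherwise, and $B^\sigma(\lambda)$ by $(B^\sigma(\lambda))_{ij}=B(\lambda)_{ij}$ if $j=\sigma(i)$ and $-\infty$ otherwise. Then $\Phi(\lambda)=\min_i\chi_i(A^\sharp B(\lambda))$, $\Phi_\tau(\lambda)=\min_i\chi_i(A_\tau^\sharp B(\lambda))$, $\Phi^\sigma(\lambda)=\min_i\chi_i(A^\sharp B^\sigma(\lambda))$. *)

(* Defs.v *)
From HB Require Import structures.
From mathcomp Require Import all_boot all_order all_algebra.
From mathcomp Require Import all_classical all_reals all_analysis.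
Set Implicit Arguments. Unset Strict Implicit. Unset Printing Implicit Defensive.
Import Order.TTheory GRing.Theory Num.Theory numFieldNormedType.Exports.
Local Open Scope ring_scope.
Local Open Scope ereal_scope.

(* Max-plus scalars are represented in \bar R; -oo is the max-plus zero.
   Entries of R_max are those different from +oo. *)

Section MinMax.
Variable R : realType.

(* Under the standing assumption the value is a real number; [fine]
   converts it back to R. *)
Definition minmax (I J : finType) (A B : I -> J -> \bar R) (x : J -> R)
  (j : J) : R :=
  fine (\big[mine/+oo]_(k | A k j != -oo)
          (- A k j + \big[maxe/-oo]_(l | B k l != -oo) (B k l + (x l)%:E))).

Definition mm_orbit (I J : finType) (A B : I -> J -> \bar R) (k : nat) : J -> R :=
  iter k (minmax A B) (fun _ => 0%R).

Definition cycle_time (I J : finType) (A B : I -> J -> \bar R) (j : J) : R :=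
  limn (fun k : nat => (mm_orbit A B k j / k%:R)%R).

Definition Phi (I J : finType) (A B : I -> J -> \bar R) : \bar R :=
  \big[mine/+oo]_(j : J) (cycle_time A B j)%:E.

Definition is_max_strategy (I J : finType) (B : I -> J -> \bar R)
  (s : {ffun I -> J}) : bool := [forall i, B i (s i) != -oo].
Definition is_min_strategy (I J : finType) (A : I -> J -> \bar R)
  (t : {ffun J -> I}) : bool := [forall j, A (t j) j != -oo].

Definition restr_min (I J : finType) (A : I -> J -> \bar R) (t : {ffun J -> I})
  : I -> J -> \bar R := fun i j => if i == t j then A i j else -oo.
Definition restr_max (I J : finType) (B : I -> J -> \bar R) (s : {ffun I -> J})
  : I -> J -> \bar R := fun i j => if j == s i then B i j else -oo.

(* Block matrices.  Rows of size m+n+1 are indexed by ('I_m + 'I_n) + unit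
   (first block row, second block row, last row); columns of size n+1 by
   'I_n + unit (first n columns, last column). *)
Definition Amat (m n : nat) (U : 'I_m -> 'I_n -> \bar R) (b : 'I_m -> \bar R)
  (p : 'I_n -> \bar R) (q : 'I_n -> \bar R) :
  ('I_m + 'I_n + unit)%type -> ('I_n + unit)%type -> \bar R :=
  fun i j =>
    match i, j with
    | inl (inl k), inl l => U k l
    | inl (inl k), inr _ => b k
    | inl (inr _), inl _ => -oo
    | inl (inr k), inr _ => p k
    | inr _, inl l => - q l
    | inr _, inr _ => -oo
    end.

Definition Bmat (m n : nat) (V : 'I_m -> 'I_n -> \bar R) (d : 'I_m -> \bar R)
  (lam : R) : ('I_m + 'I_n + unit)%type -> ('I_n + unit)%type -> \bar R :=
  fun i j =>
    match i, j with
    | inl (inl k), inl l => V k l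
    | inl (inl k), inr _ => d k
    | inl (inr k), inl l => if k == l then lam%:E else -oo
    | inl (inr _), inr _ => -oo
    | inr _, inl _ => -oo
    | inr _, inr _ => lam%:E
    end.

End MinMax.

(* Main.v *)
Require Import Defs.
From HB Require Import structures.
From mathcomp Require Import all_boot all_order all_algebra.
From mathcomp Require Import all_classical all_reals all_analysis.
From mathcomp Require Import ring lra.
Set Implicit Arguments. Unset Strict Implicit. Unset Printing Implicit Defensive.
Import Order.TTheory GRing.Theory Num.Theory numFieldNormedType.Exports.
Local Open Scope ring_scope.


Section Bias.
Variable R : realType.
Variable X : finType.
Implicit Types (s : X -> X) (w : X -> X -> R).

Definition Ssum w s (L : nat) (v : X) : R :=
  \sum_(0 <= i < L) w (iter i s v) (iter i.+1 s v).
Definition nX := #|X|.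
Definition pX := (nX`!)%N.
Definition mu w s v : R := Ssum w s pX (iter nX s v) / pX%:R.
Definition bias w s v : R :=
  (\sum_(0 <= i < pX) (Ssum w s (nX + i) v - (nX + i)%:R * mu w s v)) / pX%:R.

Lemma pX_gt0 : (0 < pX)%N.
Proof. exact: fact_gt0. Qed.

Lemma pX_neq0 : (pX%:R : R) != 0.
Proof. by rewrite pnatr_eq0 -lt0n pX_gt0. Qed.

Lemma pigeon (x : nat -> X) : exists i j, (i < j <= nX)%N /\ x i = x j.
Proof.
case: (boolP [exists i : 'I_nX.+1, exists j : 'I_nX.+1, (i < j)%N && (x i == x j)]).
  move=> /existsP[i /existsP[j /andP[ij /eqP xij]]].
  by exists i, j; rewrite ij /= -ltnS ltn_ord.
move=> /negP H; exfalso.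
have inj : injective (fun k : 'I_nX.+1 => x k).
  move=> a b xab; apply/val_inj/eqP; case: (ltngtP a b) => // ab; exfalso; apply: H.
    by apply/existsP; exists a; apply/existsP; exists b; rewrite ab xab eqxx.
  by apply/existsP; exists b; apply/existsP; exists a; rewrite ab xab eqxx.
by have := @leq_card _ _ (fun k : 'I_nX.+1 => x k) inj; rewrite card_ord /nX ltnn.
Qed.

Lemma iter_period s v : iter (nX + pX) s v = iter nX s v.
Proof.
have [i [j [/andP[ij jn] eij]]] := pigeon (fun k => iter k s v).
set d := (j - i)%N.
have d0 : (0 < d)%N by rewrite subn_gt0.
have hk : forall k, iter (i + k * d) s v = iter i s v.
  elim=> [|k IH]; first by rewrite mul0n addn0.
  rewrite mulSn addnCA iterD IH -iterD subnK ?(ltnW ij) //.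
have dp : (d %| pX)%N by apply: dvdn_fact; rewrite d0 /= /d (leq_trans (leq_subr _ _) jn).
have -> : (nX + pX = (nX - i) + (i + (pX %/ d) * d))%N.
  by rewrite divnK // addnA subnK // (leq_trans (ltnW ij) jn).
rewrite iterD hk -iterD subnK //; exact: (leq_trans (ltnW ij) jn).
Qed.

Lemma Ssum0 w s v : Ssum w s 0 v = 0.
Proof. by rewrite /Ssum big_geq. Qed.

Lemma SsumSr w s L v :
  Ssum w s L.+1 v = Ssum w s L v + w (iter L s v) (iter L.+1 s v).
Proof. by rewrite /Ssum big_nat_recr. Qed.

Lemma SsumSl w s L v :
  Ssum w s L.+1 v = w v (s v) + Ssum w s L (s v).
Proof.
rewrite /Ssum big_nat_recl //=; congr (_ + _).
by apply: eq_bigr => i _; rewrite -!iterSr.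
Qed.

Lemma Ssum_iter w s L v :
  Ssum w s L (iter nX s v) = \sum_(0 <= i < L) w (iter (nX + i) s v) (iter (nX + i).+1 s v).
Proof.
rewrite /Ssum; apply: eq_bigr => i _.
by rewrite -iterD -(iterD i.+1) [(i + nX)%N]addnC [(i.+1 + nX)%N]addnC addnS.
Qed.

Lemma mu_s w s v : mu w s (s v) = mu w s v.
Proof.
rewrite /mu; congr (_ / _).
have -> : iter nX s (s v) = s (iter nX s v) by rewrite -iterSr iterS.
set z := iter nX s v.
have hz : iter pX s z = z by rewrite /z -iterD addnC iter_period.
have E := SsumSl w s pX z; rewrite SsumSr iterS hz in E.
lra.
Qed.

Lemma mu_iter w s L v : mu w s (iter L s v) = mu w s v.
Proof. by elim: L => //= L IH; rewrite mu_s. Qed.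

Lemma bias_eq w s v : w v (s v) + bias w s (s v) = mu w s v + bias w s v.
Proof.
rewrite /bias mu_s.
have H : forall i, Ssum w s (nX + i) (s v) =
   Ssum w s (nX + i) v + w (iter (nX + i) s v) (iter (nX + i).+1 s v) - w v (s v).
  by move=> i; rewrite -SsumSr SsumSl addrC addKr.
under eq_bigr do rewrite H.
have hp := pX_neq0.
have E : \sum_(0 <= i < pX) (Ssum w s (nX + i) v + w (iter (nX + i) s v) (iter (nX + i).+1 s v)
                            - w v (s v) - (nX + i)%:R * mu w s v)
  = \sum_(0 <= i < pX) (Ssum w s (nX + i) v - (nX + i)%:R * mu w s v)
    + Ssum w s pX (iter nX s v) - pX%:R * w v (s v).
  rewrite Ssum_iter mulr_natl -(subn0 pX) -sumr_const_nat subn0 -big_split /= -sumrB.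
  apply: eq_bigr => i _; lra.
rewrite E.
have -> : Ssum w s pX (iter nX s v) = mu w s v * pX%:R by rewrite /mu divfK.
set S := \sum_(0 <= i < pX) _.
field; exact: hp.
Qed.

Lemma Ssum_bias w s L v :
  Ssum w s L v = L%:R * mu w s v + bias w s v - bias w s (iter L s v).
Proof.
elim: L => [|L IH]; first by rewrite Ssum0 mul0r add0r subrr.
rewrite SsumSr IH.
have := bias_eq w s (iter L s v); rewrite mu_iter iterS => E.
have -> : w (iter L s v) (iter L.+1 s v) = mu w s v + bias w s (iter L s v) - bias w s (s (iter L s v)).
  by rewrite iterS -E addrK.
rewrite -iterS mulrSr; lra.
Qed.

End Bias.


Section OnePlayer.
Variable R : realType.
Variable X : finType.
Implicit Types (s : X -> X) (w : X -> X -> R).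

Definition maxop (adj : rel X) w (G : (X -> R) -> X -> R) :=
  forall y v, (forall u, adj v u -> w v u + y u <= G y v) /\
              exists2 u, adj v u & G y v = w v u + y u.

Definition valid (adj : rel X) s := forall v, adj v (s v).

Definition Wk w (x : nat -> X) (N : nat) : R := \sum_(0 <= t < N) w (x t) (x t.+1).
Definition walk (adj : rel X) (x : nat -> X) (N : nat) :=
  forall t, (t < N)%N -> adj (x t) (x t.+1).

Definition dflt (adj : rel X) v := odflt v [pick u | adj v u].

Lemma dfltP (adj : rel X) (hadj : forall v, exists u, adj v u) v : adj v (dflt adj v).
Proof.
rewrite /dflt; case: pickP => //= H; have [u hu] := hadj v.
by move: (H u); rewrite hu.
Qed.

Variable adj : rel X.
Hypothesis hadj : forall v, exists u, adj v u.
Variable w : X -> X -> R.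

Lemma walk_iter G (hG : maxop adj w G) N v :
  exists x, [/\ x 0%N = v, walk adj x N & iter N G (fun _ => 0) v = Wk w x N].
Proof.
elim: N v => [|N IH] v.
  by exists (fun _ => v); split => //; rewrite /Wk big_geq.
rewrite iterS; have [_ [u auv ->]] := hG (iter N G (fun _ => 0)) v.
have [x [x0 wx ->]] := IH u.
exists (fun t => if t is t'.+1 then x t' else v); split => //.
  by case=> [|t] /= ht; [rewrite x0 | apply: wx].
by rewrite /Wk big_nat_recl //= x0.
Qed.

Variable eta : X -> R.
Hypothesis heta : forall s, valid adj s -> forall v, mu w s v <= eta v.

Definition Wm := \big[Num.max/0]_(a : X) \big[Num.max/0]_(b : X) `|w a b|.
Definition Em := \big[Num.max/0]_(a : X) `|eta a|.
Definition Kb := (nX X)%:R * (Wm + Em).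

Lemma Wm_ge a b : `|w a b| <= Wm.
Proof.
apply: le_trans (le_bigmax _ _ a); exact: (le_bigmax _ (fun b => `|w a b|) b).
Qed.

Lemma Em_ge a : `|eta a| <= Em.
Proof. exact: (le_bigmax _ (fun a => `|eta a|) a). Qed.

Lemma Wm_ge0 : 0 <= Wm.
Proof. exact: bigmax_ge_id. Qed.
Lemma Em_ge0 : 0 <= Em.
Proof. exact: bigmax_ge_id. Qed.

Lemma walk_bound_small x N : (N <= nX X)%N -> Wk w x N <= N%:R * eta (x 0%N) + Kb.
Proof.
move=> hN.
have h1 : Wk w x N <= N%:R * Wm.
  apply: (@le_trans _ _ (\sum_(0 <= t < N) Wm)).
    by apply: ler_sum => t _; apply: le_trans (Wm_ge _ _); exact: ler_norm.
  by rewrite sumr_const_nat subn0 mulr_natl.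
have h2 : - (N%:R * Em) <= N%:R * eta (x 0%N).
  rewrite -mulrN; apply: ler_wpM2l => //; rewrite lerNl.
  have := ler_norm (- eta (x 0%N)); rewrite normrN => h; have := Em_ge (x 0%N); lra.
have h3 : N%:R * (Wm + Em) <= Kb.
  by apply: ler_wpM2r; [rewrite addr_ge0 // ?Wm_ge0 ?Em_ge0 | rewrite ler_nat].
rewrite mulrDr in h3; lra.
Qed.


Lemma big_shift0 (F : nat -> R) m n :
  \sum_(m <= i < n) F i = \sum_(0 <= i < n - m) F (i + m)%N.
Proof. by rewrite -{1}(add0n m) big_addn. Qed.

Lemma sum_split (F : nat -> R) m n k : (m <= n)%N -> (n <= k)%N ->
  \sum_(m <= i < k) F i = \sum_(m <= i < n) F i + \sum_(n <= i < k) F i.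
Proof. by move=> a b; rewrite (big_cat_nat a b). Qed.

Lemma walk_bound N x : walk adj x N -> Wk w x N <= N%:R * eta (x 0%N) + Kb.
Proof.
elim/ltn_ind: N x => N IH x wx.
case: (leqP N (nX X)) => hN; first exact: walk_bound_small.
have ex : exists q, [exists i : 'I_q, x i == x q] && (q <= nX X)%N.
  have [i [j [/andP [ij jn] e]]] := pigeon x.
  by exists j; rewrite jn andbT; apply/existsP; exists (Ordinal ij); rewrite e.
case: (ex_minnP ex) => q /andP[/existsP[[p pq] /eqP /= xpq] qn] qmin.
have inj : forall i j, (i < j)%N -> (j < q)%N -> x i <> x j.
  move=> i j ij jq e; have := qmin j; rewrite (leq_trans (ltnW jq) qn) andbT.
  have -> : [exists i0 : 'I_j, x i0 == x j] by apply/existsP; exists (Ordinal ij); rewrite e.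
  by move=> /(_ isT); rewrite leqNgt jq.
pose s := fun v => if [pick t : 'I_q | x t == v] is Some t then x t.+1 else dflt adj v.
have sx : forall t, (t < q)%N -> s (x t) = x t.+1.
  move=> t tq; rewrite /s; case: pickP => [t' /eqP e | H].
    have -> : nat_of_ord t' = t => //.
    case: (ltngtP t' t) => // h; exfalso; first exact: inj h tq e.
    by apply: (inj t t' h (ltn_ord t')); rewrite e.
  by have := H (Ordinal tq); rewrite eqxx.
have qN : (q < N)%N by apply: leq_ltn_trans qn hN.
have vs : valid adj s.
  move=> v; rewrite /s; case: pickP => [t /eqP <- | _]; last exact: dfltP.
  by apply: wx; apply: ltn_trans qN.
have it0 : forall t, (t <= q)%N -> iter t s (x 0%N) = x t.
  elim=> [|t IHt] ht //=; rewrite IHt ?(ltnW ht) // sx //.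
have itp : forall i, (p + i <= q)%N -> iter i s (x p) = x (p + i)%N.
  elim=> [|i IHi] hi /=; first by rewrite addn0.
  by rewrite IHi ?(leq_trans _ hi) ?leq_add2l // sx ?addnS // -addnS.
set L := (q - p)%N.
have Lpos : (0 < L)%N by rewrite subn_gt0.
have qpL : (p + L = q)%N by rewrite /L subnKC // ltnW.
have cyc : Ssum w s L (x p) = \sum_(p <= t < q) w (x t) (x t.+1).
  rewrite /Ssum [in RHS]big_shift0 -/L; apply: eq_big_nat => i /andP[_ hi].
  have h1 : (p + i.+1 <= q)%N by rewrite -qpL leq_add2l.
  by rewrite !itp ?(leq_trans _ h1) ?leq_add2l // addnS (addnC i p).
have cycmu : Ssum w s L (x p) = L%:R * mu w s (x 0%N).
  rewrite Ssum_bias itp qpL // -xpq addrK -(it0 p) ?mu_iter //; exact: ltnW.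
have hmu : mu w s (x 0%N) <= eta (x 0%N) by apply: heta.
pose x' := fun t => if (t <= p)%N then x t else x (t + L)%N.
have x'0 : x' 0%N = x 0%N by rewrite /x' leq0n.
have hx' : forall t, (p <= t)%N -> x' t = x (t + L)%N.
  move=> t pt; rewrite /x'; case: ifP => // tp.
  have -> : t = p by apply/eqP; rewrite eqn_leq tp pt.
  by rewrite qpL.
have LN : (L <= N)%N by apply: leq_trans (leq_subr p q) (ltnW qN).
have wx' : walk adj x' (N - L).
  move=> t ht; case: (ltnP t p) => tp.
    rewrite /x' (ltnW tp) tp; apply: wx.
    by apply: ltn_trans qN; apply: ltn_trans pq.
  rewrite !hx' ?(leq_trans tp) // addSn; apply: wx.
  by rewrite addnC -ltn_subRL.
have split1 : Wk w x N = \sum_(0 <= t < p) w (x t) (x t.+1) +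
     \sum_(p <= t < q) w (x t) (x t.+1) + \sum_(q <= t < N) w (x t) (x t.+1).
  by rewrite /Wk (sum_split _ (leq0n q) (ltnW qN)) (sum_split _ (leq0n p) (ltnW pq)).
have pNL : (p <= N - L)%N by rewrite leq_subRL // addnC qpL ltnW.
have split2 : Wk w x' (N - L) = \sum_(0 <= t < p) w (x t) (x t.+1) +
     \sum_(q <= t < N) w (x t) (x t.+1).
  rewrite /Wk (sum_split _ (leq0n p) pNL); congr (_ + _).
    apply: eq_big_nat => t /andP[_ tp]; rewrite /x' (ltnW tp) tp //.
  rewrite big_shift0 [in RHS]big_shift0 -subnDA (addnC L p) qpL.
  apply: eq_big_nat => i _; rewrite !hx' ?leq_addl ?(leqW (leq_addl i p)) //.
  by rewrite addSn -!addnA qpL.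
have NL : (N - L < N)%N by rewrite ltn_subrL Lpos /=; apply: leq_ltn_trans (leq0n _) qN.
have := IH (N - L)%N NL x' wx'; rewrite x'0 split2 => IH''.
rewrite split1 -cyc cycmu.
rewrite (natrB _ LN) in IH''.
have hL : 0 <= L%:R :> R by [].
have : L%:R * mu w s (x 0%N) <= L%:R * eta (x 0%N) by apply: ler_wpM2l.
lra.
Qed.

Theorem maxop_bound G (hG : maxop adj w G) N v :
  iter N G (fun _ => 0) v <= N%:R * eta v + Kb.
Proof.
have [x [x0 wx ->]] := walk_iter hG N v.
by rewrite -x0; apply: walk_bound.
Qed.

End OnePlayer.


Section Neg.
Variable R : realType.
Variable X : finType.
Implicit Types (s : X -> X) (w : X -> X -> R).

Lemma Ssum_neg w s L v : Ssum (fun a b => - w a b) s L v = - Ssum w s L v.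
Proof. by rewrite /Ssum sumrN. Qed.

Lemma mu_neg w s v : mu (fun a b => - w a b) s v = - mu w s v.
Proof. by rewrite /mu Ssum_neg mulNr. Qed.

Lemma bias_neg w s v : bias (fun a b => - w a b) s v = - bias w s v.
Proof.
rewrite /bias -mulNr -sumrN; congr (_ / _); apply: eq_bigr => i _.
by rewrite Ssum_neg mu_neg; lra.
Qed.

Definition Hb w s := \big[Num.max/0]_(u : X) `|bias w s u|.

Lemma Hb_ge w s u : `|bias w s u| <= Hb w s.
Proof. exact: (le_bigmax _ (fun u => `|bias w s u|) u). Qed.
Lemma Hb_ge0 w s : 0 <= Hb w s.
Proof. exact: bigmax_ge_id. Qed.

Lemma Hb_neg w s : Hb (fun a b => - w a b) s = Hb w s.
Proof. by rewrite /Hb; apply: eq_bigr => u _; rewrite bias_neg normrN. Qed.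

Lemma disc_upper w s (x : X -> R) (a : R) : 0 < a -> a < 1 ->
  (forall v, w v (s v) + a * x (s v) <= x v) ->
  forall v, mu w s v <= (1 - a) * (x v + 2 * Hb w s).
Proof.
move=> a0 a1 hx.
set r := 1 - a.
have r0 : 0 < r by rewrite /r subr_gt0.
have rn0 : r != 0 by rewrite gt_eqF.
pose y := fun u => mu w s u / r + bias w s u.
have key : forall v, y v = w v (s v) + a * y (s v) + r * bias w s (s v).
  move=> v; rewrite /y mu_s.
  have E := bias_eq w s v.
  have -> : a = 1 - r by rewrite /r; lra.
  have -> : w v (s v) = mu w s v + bias w s v - bias w s (s v) by rewrite -E addrK.
  by field.
pose D := \big[Num.max/0]_(u : X) (y u - x u).
have Dge : forall u, y u - x u <= D by move=> u; exact: (le_bigmax _ (fun u => y u - x u) u).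
have D0 : 0 <= D by exact: bigmax_ge_id.
have H0 := Hb_ge0 w s.
have hv : forall v, y v - x v <= a * D + r * Hb w s.
  move=> v; rewrite key.
  have h1 : a * (y (s v) - x (s v)) <= a * D by apply: ler_wpM2l; [exact: ltW|].
  have h2 : r * bias w s (s v) <= r * Hb w s.
    apply: ler_wpM2l; [exact: ltW|]; apply: le_trans (Hb_ge w s (s v)); exact: ler_norm.
  have h3 := hx v.
  rewrite mulrBr in h1; lra.
have hD : D <= a * D + r * Hb w s.
  apply: bigmax_le; last by move=> u _; apply: hv.
  by apply: addr_ge0; apply: mulr_ge0 => //; exact: ltW.
have hD2 : D <= Hb w s.
  have : r * D <= r * Hb w s by rewrite /r; rewrite /r in hD; lra.
  by rewrite ler_pM2l.
move=> v.
have := Dge v; rewrite /y => h.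
have hb : - Hb w s <= bias w s v.
  have := Hb_ge w s v; have := ler_norm (- bias w s v); rewrite normrN; lra.
have hm : mu w s v / r <= x v + 2 * Hb w s by lra.
have -> : mu w s v = r * (mu w s v / r) by field.
by apply: ler_wpM2l => //; exact: ltW.
Qed.

Lemma disc_lower w s (x : X -> R) (a : R) : 0 < a -> a < 1 ->
  (forall v, x v <= w v (s v) + a * x (s v)) ->
  forall v, (1 - a) * (x v - 2 * Hb w s) <= mu w s v.
Proof.
move=> a0 a1 hx v.
have h : forall v, - w v (s v) + a * - x (s v) <= - x v.
  by move=> u; have := hx u; lra.
have := disc_upper (w := fun p q => - w p q) (x := fun u => - x u) a0 a1 h v.
rewrite Hb_neg mu_neg.
have -> : - x v + 2 * Hb w s = - (x v - 2 * Hb w s) by lra.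
rewrite mulrN; lra.
Qed.

End Neg.


Section GameOp.
Variable R : realType.
Variable X : finType.
Variable o : X -> bool.
Implicit Types (s : X -> X) (w : X -> X -> R) (adj : rel X) (y : X -> R).

Definition gameop adj w (F : (X -> R) -> X -> R) := forall y v,
  (if o v then forall u, adj v u -> w v u + y u <= F y v
   else forall u, adj v u -> F y v <= w v u + y u) /\
  exists2 u, adj v u & F y v = w v u + y u.

Lemma gameop_shift adj w F (hF : gameop adj w F) y y' c :
  (forall u, y u <= y' u + c) -> forall v, F y v <= F y' v + c.
Proof.
move=> hy v; have [h1 [u au e1]] := hF y v; have [h2 [u' au' e2]] := hF y' v.
case: (o v) h1 h2 => h1 h2.
- have := h2 u au; have := hy u; rewrite e1; lra.
- have := h1 u' au'; have := hy u'; rewrite e2; lra.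
Qed.

Lemma gameop_cmp adj adj' w F F' (hF : gameop adj w F) (hF' : gameop adj' w F')
  (hmax : forall v u, o v -> adj v u -> adj' v u)
  (hmin : forall v u, ~~ o v -> adj' v u -> adj v u) y v : F y v <= F' y v.
Proof.
have [h1 [u au e1]] := hF y v; have [h2 [u' au' e2]] := hF' y v.
case ov: (o v) h1 h2 => h1 h2.
- by rewrite e1; apply: h2; apply: hmax.
- by rewrite e2; apply: h1; apply: hmin => //; rewrite ov.
Qed.

Lemma iter_mono adj w F (hF : gameop adj w F) y y' :
  (forall u, y u <= y' u) -> forall N v, iter N F y v <= iter N F y' v.
Proof.
move=> hy; elim=> [|N IH] v //=.
rewrite -[X in _ <= X]addr0; apply: (gameop_shift hF) => u; rewrite addr0; exact: IH.
Qed.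

Lemma iter_cmp adj adj' w F F' (hF : gameop adj w F) (hF' : gameop adj' w F')
  (hmax : forall v u, o v -> adj v u -> adj' v u)
  (hmin : forall v u, ~~ o v -> adj' v u -> adj v u) y N v :
  iter N F y v <= iter N F' y v.
Proof.
elim: N v => [|N IH] v //=.
apply: le_trans (gameop_cmp hF hF' hmax hmin _ _).
rewrite -[X in _ <= X]addr0; apply: (gameop_shift hF) => u; rewrite addr0; exact: IH.
Qed.

Definition Fgen adj w y v : R :=
  if o v then
    let u := Order.arg_max (dflt adj v) (fun u => adj v u) (fun u => w v u + y u) in w v u + y u
  else
    let u := Order.arg_min (dflt adj v) (fun u => adj v u) (fun u => w v u + y u) in w v u + y u.

Lemma Fgen_gameop adj w (hadj : forall v, exists u, adj v u) : gameop adj w (Fgen adj w).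
Proof.
move=> y v; rewrite /Fgen; have hd := dfltP hadj v.
case: (o v).
- by case: arg_maxP => // u au hu; split => //; exists u.
- by case: arg_minP => // u au hu; split => //; exists u.
Qed.

End GameOp.


Section Fix.
Variable R : realType.
Variable X : finType.
Variable o : X -> bool.
Variable adj : rel X.
Variable w : X -> X -> R.
Variable F : (X -> R) -> X -> R.
Hypothesis hF : gameop o adj w F.
Variable a : R.
Hypothesis a0 : 0 < a.
Hypothesis a1 : a < 1.

Let T (y : X -> R) := F (fun u => a * y u).

Lemma T_shift y y' c : (forall u, y u <= y' u + c) -> forall v, T y v <= T y' v + a * c.
Proof.
move=> h v; apply: (gameop_shift hF) => u.
rewrite -mulrDr; apply: ler_wpM2l; [exact: ltW | exact: h].
Qed.

Lemma T_mono y y' : (forall u, y u <= y' u) -> forall v, T y v <= T y' v.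
Proof.
move=> h v; rewrite -[X in _ <= X]addr0 -(mulr0 a); apply: T_shift => u.
by rewrite addr0; exact: h.
Qed.

Lemma fixpoint_exists : exists x : X -> R, forall v, x v = F (fun u => a * x u) v.
Proof.
set r := 1 - a.
have r0 : 0 < r by rewrite /r subr_gt0.
have rn0 : r != 0 by rewrite gt_eqF.
pose C := \big[Num.max/0]_(v : X) `|T (fun _ => 0) v|.
have Cge : forall v, `|T (fun _ => 0) v| <= C.
  by move=> v; exact: (le_bigmax _ (fun v => `|T (fun _ => 0) v|) v).
have C0 : 0 <= C by exact: bigmax_ge_id.
pose u0 := fun _ : X => C / r.
have hu0 : 0 <= C / r by apply: divr_ge0 => //; exact: ltW.
have eC : C + a * (C / r) = C / r by rewrite /r; field.
have Tu0 : forall v, T u0 v <= u0 v.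
  move=> v; have := @T_shift u0 (fun _ => 0) (C / r) (fun u => ltac:(rewrite add0r; exact: lexx)) v.
  have := Cge v; have := ler_norm (T (fun _ => 0) v); rewrite /u0 => h1 h2 h3.
  lra.
have Tl0 : forall v, - u0 v <= T (fun u => - u0 u) v.
  move=> v; have := @T_shift (fun _ => 0) (fun u => - u0 u) (C / r) (fun u => ltac:(rewrite /u0 addNr; exact: lexx)) v.
  have := Cge v; have := ler_norm (- T (fun _ => 0) v); rewrite normrN /u0 => h1 h2 h3.
  lra.
pose sq := fun N => iter N T u0.
have sq_dec : forall N v, sq N.+1 v <= sq N v.
  elim=> [|N IH] v; first exact: Tu0.
  by change (T (sq N.+1) v <= T (sq N) v); apply: T_mono => u; apply: IH.
have sq_decn : forall N k v, sq (N + k)%N v <= sq N v.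
  move=> N; elim=> [|k IH] v; first by rewrite addn0.
  by rewrite addnS; apply: le_trans (sq_dec _ _) (IH v).
have sq_lb : forall N v, - u0 v <= sq N v.
  elim=> [|N IH] v; first by rewrite /sq /= /u0; lra.
  apply: le_trans (Tl0 v) _; change (T (fun u => - u0 u) v <= T (sq N) v); apply: T_mono => u; exact: IH.
pose x := fun v => inf (range (fun N => sq N v)).
have hinf : forall v, has_inf (range (fun N => sq N v)).
  move=> v; split; first by exists (sq 0%N v); exists 0%N.
  by exists (- u0 v) => z [N _ <-]; apply: sq_lb.
have xle : forall N v, x v <= sq N v.
  move=> N v; have [_ hl] := hinf v; apply: (ge_inf hl); by exists N.
exists x => v; apply/eqP; rewrite eq_le; apply/andP; split; last first.
  apply: lb_le_inf; first by exists (sq 0%N v); exists 0%N.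
  move=> z [[|N] _ <-].
    by apply: le_trans (Tu0 v); apply: T_mono => u; apply: (xle 0%N).
  by change (T x v <= T (sq N) v); apply: T_mono => u; apply: xle.
apply/ler_addgt0Pr => e e0.
have hN : forall u, exists N, sq N u < x u + e.
  move=> u; have [z [N _ <-] hz] := inf_adherent e0 (hinf u); by exists N.
have [Nf hNf] := choice hN.
pose Nm := (\max_(u : X) Nf u)%N.
have hNm : forall u, sq Nm u < x u + e.
  move=> u; have : (Nf u <= Nm)%N by apply: leq_bigmax.
  move=> /subnKC <-; apply: le_lt_trans (sq_decn _ _ _) (hNf u).
apply: le_trans (xle Nm.+1 v) _.
change (sq Nm.+1 v) with (T (sq Nm) v).
have := @T_shift (sq Nm) x e (fun u => ltW (hNm u)) v.
have : a * e <= e by rewrite -[X in _ <= X]mul1r; apply: ler_wpM2r; [exact: ltW | exact: ltW].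
rewrite /T; lra.
Qed.

End Fix.


Section Saddle.
Variable R : realType.
Variable X : finType.
Variable o : X -> bool.
Variable adj : rel X.
Hypothesis hadj : forall v, exists u, adj v u.
Variable w : X -> X -> R.

Definition validb (s : {ffun X -> X}) := [forall v, adj v (s v)].
Definition agMin (s t : {ffun X -> X}) := [forall v, ~~ o v ==> (s v == t v)].
Definition agMax (s t : {ffun X -> X}) := [forall v, o v ==> (s v == t v)].

Definition Hall := \big[Num.max/0]_(s : {ffun X -> X}) Hb w s.

Lemma Hall_ge (s : {ffun X -> X}) : Hb w s <= Hall.
Proof. rewrite /Hall; exact: le_bigmax. Qed.

Definition delta (t : {ffun X -> X}) : R :=
  Num.max (\big[Num.max/0]_(s | validb s && agMin s t) \big[Num.max/0]_(v : X) (mu w s v - mu w t v))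
          (\big[Num.max/0]_(s | validb s && agMax s t) \big[Num.max/0]_(v : X) (mu w t v - mu w s v)).

Lemma disc_saddle a : 0 < a -> a < 1 ->
  exists t, validb t && (delta t <= 4 * (1 - a) * Hall).
Proof.
move=> a0 a1.
have hF := Fgen_gameop o w hadj.
have [x hx] := fixpoint_exists hF a0 a1.
set F := Fgen o adj w in hF hx.
pose t := [ffun v => odflt v [pick u | adj v u && (F (fun u => a * x u) v == w v u + a * x u)]].
have ht : forall v, adj v (t v) /\ x v = w v (t v) + a * x (t v).
  move=> v; rewrite ffunE; case: pickP => [u /andP[au /eqP e] | H] /=.
    by split => //; rewrite hx e.
  have [_ [u au e]] := hF (fun u => a * x u) v.
  by have := H u; rewrite au e eqxx.
have r0 : 0 < 1 - a by rewrite subr_gt0.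
have H0 : 0 <= Hall by apply: le_trans (Hall_ge t); exact: Hb_ge0.
have up : forall s, validb s -> agMin s t -> forall v, mu w s v <= (1 - a) * (x v + 2 * Hall).
  move=> s /forallP vs /forallP ag v.
  have hs : forall v, w v (s v) + a * x (s v) <= x v.
    move=> u; have [h1 _] := hF (fun u => a * x u) u.
    case ou: (o u) h1 => h1.
      by rewrite [X in _ <= X]hx; apply: h1.
    have := ag u; rewrite ou /= => /eqP ->; have [_ <-] := ht u; exact: lexx.
  apply: le_trans (disc_upper a0 a1 hs v) _.
  apply: ler_wpM2l; [exact: ltW|]; rewrite lerD2l; apply: ler_wpM2l => //; exact: Hall_ge.
have lo : forall s, validb s -> agMax s t -> forall v, (1 - a) * (x v - 2 * Hall) <= mu w s v.
  move=> s /forallP vs /forallP ag v.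
  have hs : forall v, x v <= w v (s v) + a * x (s v).
    move=> u; have [h1 _] := hF (fun u => a * x u) u.
    case ou: (o u) h1 => h1.
      have := ag u; rewrite ou /= => /eqP ->; have [_ <-] := ht u; exact: lexx.
    by rewrite [X in X <= _]hx; apply: h1.
  apply: le_trans (disc_lower a0 a1 hs v).
  apply: ler_wpM2l; [exact: ltW|]; rewrite lerD2l lerN2; apply: ler_wpM2l => //; exact: Hall_ge.
have vt : validb t by apply/forallP => v; have [] := ht v.
have agmt : agMin t t by apply/forallP => v; rewrite eqxx implybT.
have agxt : agMax t t by apply/forallP => v; rewrite eqxx implybT.
exists t; rewrite vt /=.
have e4 : 0 <= 4 * (1 - a) * Hall by rewrite mulr_ge0 // mulr_ge0 // ltW.
rewrite /delta ge_max; apply/andP; split.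
  apply: bigmax_le => // s /andP[vs ag]; apply: bigmax_le => // v _.
  have := up s vs ag v; have := lo t vt agxt v.
  have E1 : (1 - a) * (x v + 2 * Hall) = (1 - a) * x v + 2 * ((1 - a) * Hall) by ring.
  have E2 : (1 - a) * (x v - 2 * Hall) = (1 - a) * x v - 2 * ((1 - a) * Hall) by ring.
  have E3 : 4 * (1 - a) * Hall = 4 * ((1 - a) * Hall) by ring.
  rewrite E1 E2 E3; lra.
apply: bigmax_le => // s /andP[vs ag]; apply: bigmax_le => // v _.
have := lo s vs ag v; have := up t vt agmt v.
have E1 : (1 - a) * (x v + 2 * Hall) = (1 - a) * x v + 2 * ((1 - a) * Hall) by ring.
have E2 : (1 - a) * (x v - 2 * Hall) = (1 - a) * x v - 2 * ((1 - a) * Hall) by ring.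
have E3 : 4 * (1 - a) * Hall = 4 * ((1 - a) * Hall) by ring.
rewrite E1 E2 E3; lra.
Qed.

Lemma saddle : exists t : {ffun X -> X}, [/\ validb t,
  (forall s, validb s -> agMin s t -> forall v, mu w s v <= mu w t v) &
  (forall s, validb s -> agMax s t -> forall v, mu w t v <= mu w s v)].
Proof.
pose sd := [ffun v => dflt adj v].
have vsd : validb sd by apply/forallP => v; rewrite ffunE; exact: dfltP.
pose t0 := Order.arg_min sd validb delta.
have [t vt tmin] : exists2 t, validb t & forall s, validb s -> delta t <= delta s.
  by exists t0; rewrite /t0; case: arg_minP.
have H0 : 0 <= Hall by apply: le_trans (Hall_ge t); exact: Hb_ge0.
have dt : delta t <= 0.
  apply/ler_addgt0Pr => e e0; rewrite add0r.
  set e' := Num.min e 1.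
  have e'0 : 0 < e' by rewrite lt_min e0 ltr01.
  have e'1 : e' <= 1 by rewrite ge_min lexx orbT.
  have e'e : e' <= e by rewrite ge_min lexx.
  set a := 1 - e' / (4 * (Hall + 1)).
  have H1 : 0 < 4 * (Hall + 1) by rewrite mulr_gt0 // ltr_pwDr.
  have q0 : 0 < e' / (4 * (Hall + 1)) by rewrite divr_gt0.
  have q1 : e' / (4 * (Hall + 1)) < 1.
    rewrite ltr_pdivrMr // mul1r; apply: le_lt_trans e'1 _; lra.
  have a0 : 0 < a by rewrite /a subr_gt0.
  have a1 : a < 1 by rewrite /a; lra.
  have [s /andP[vs ds]] := disc_saddle a0 a1.
  have hd := le_trans (tmin s vs) ds.
  have E : 4 * (1 - a) * Hall = e' * (Hall / (Hall + 1)) by rewrite /a; field; lra.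
  rewrite E in hd.
  have hf : Hall / (Hall + 1) <= 1 by rewrite ler_pdivrMr ?mul1r; lra.
  have : e' * (Hall / (Hall + 1)) <= e'.
    by rewrite -[X in _ <= X]mulr1; apply: ler_wpM2l => //; exact: ltW.
  lra.
have [d1 d2] : (\big[Num.max/0]_(s | validb s && agMin s t) \big[Num.max/0]_(v : X) (mu w s v - mu w t v)) <= 0 /\
  (\big[Num.max/0]_(s | validb s && agMax s t) \big[Num.max/0]_(v : X) (mu w t v - mu w s v)) <= 0.
  by move: dt; rewrite /delta ge_max => /andP[].
exists t; split => // s vs ag v.
  move/bigmax_leP: d1 => [_ /(_ s)]; rewrite vs ag => /(_ isT) /bigmax_leP [_ /(_ v isT)].
  lra.
move/bigmax_leP: d2 => [_ /(_ s)]; rewrite vs ag => /(_ isT) /bigmax_leP [_ /(_ v isT)].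
lra.
Qed.

End Saddle.


Section MainGame.
Variable R : realType.
Variable X : finType.
Variable o : X -> bool.
Variable adj : rel X.
Hypothesis hadj : forall v, exists u, adj v u.
Variable w : X -> X -> R.

Definition adjMin (t : X -> X) : rel X := fun v u => if o v then adj v u else u == t v.
Definition adjMax (t : X -> X) : rel X := fun v u => if o v then u == t v else adj v u.

Lemma mu_ffun (s : X -> X) v : mu w [ffun u => s u] v = mu w s v.
Proof. by congr (mu w _ v); apply/funext => u; rewrite ffunE. Qed.

Theorem main_game : exists (t : {ffun X -> X}) (eta : X -> R), [/\ (forall v, adj v (t v)),
  (forall F, gameop o (adjMin t) w F -> exists K, forall N v,
       iter N F (fun _ => 0) v <= N%:R * eta v + K),
  (forall F, gameop o (adjMax t) w F -> exists K, forall N v,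
       N%:R * eta v - K <= iter N F (fun _ => 0) v) &
  (forall F, gameop o adj w F -> exists K, forall N v,
       `|iter N F (fun _ => 0) v - N%:R * eta v| <= K)].
Proof.
have [t [/forallP vt smin smax]] := saddle o hadj w.
exists t, (mu w t).
have hmin : forall v, exists u, adjMin t v u.
  by move=> v; rewrite /adjMin; case: (o v); [exact: hadj | exists (t v)].
have hmax : forall v, exists u, adjMax t v u.
  by move=> v; rewrite /adjMax; case: (o v); [exists (t v) | exact: hadj].
have partA : forall F, gameop o (adjMin t) w F -> exists K, forall N v,
       iter N F (fun _ => 0) v <= N%:R * mu w t v + K.
  move=> F hF.
  have mF : maxop (adjMin t) w F.
    move=> y v; have [h1 [u au e]] := hF y v; split; last by exists u.
    move: h1 au; rewrite /adjMin; case: (o v) => // h1 /eqP au u' /eqP au'.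
    by rewrite e au au'.
  have heta : forall s, valid (adjMin t) s -> forall v, mu w s v <= mu w t v.
    move=> s vs v; rewrite -(mu_ffun s); apply: smin.
      apply/forallP => u; rewrite ffunE; have := vs u; rewrite /adjMin.
      by case: (o u) => // /eqP ->.
    apply/forallP => u; rewrite ffunE; apply/implyP => ou; have := vs u.
    by rewrite /adjMin (negbTE ou).
  by exists (Kb w (mu w t)) => N v; apply: (maxop_bound hmin heta mF).
have partB : forall F, gameop o (adjMax t) w F -> exists K, forall N v,
       N%:R * mu w t v - K <= iter N F (fun _ => 0) v.
  move=> F hF.
  pose G := fun (y : X -> R) v => - F (fun u => - y u) v.
  have mG : maxop (adjMax t) (fun a b => - w a b) G.
    move=> y v; have [h1 [u au e]] := hF (fun u => - y u) v.
    split; last by exists u => //; rewrite /G e; lra.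
    move: h1 au e; rewrite /adjMax /G; case: (o v) => h1.
      by move=> /eqP au e u' /eqP au'; rewrite e au au'; lra.
    by move=> au e u' au'; have := h1 u' au'; lra.
  have heta : forall s, valid (adjMax t) s -> forall v, mu (fun a b => - w a b) s v <= - mu w t v.
    move=> s vs v; rewrite mu_neg lerN2 -(mu_ffun s); apply: smax.
      apply/forallP => u; rewrite ffunE; have := vs u; rewrite /adjMax.
      by case: (o u) => // /eqP ->.
    apply/forallP => u; rewrite ffunE; apply/implyP => ou; have := vs u.
    by rewrite /adjMax ou.
  exists (Kb (fun a b => - w a b) (fun v => - mu w t v)) => N v.
  have := maxop_bound hmax heta mG N v.
  have -> : iter N G (fun _ => 0) = fun v => - iter N F (fun _ => 0) v.
    elim: N {v} => [|N IH]; first by apply/funext => v /=; rewrite oppr0.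
    apply/funext => v; rewrite iterS IH /G.
    have -> : (fun u => - - iter N F (fun _ => 0) u) = iter N F (fun _ => 0).
      by apply/funext => u; rewrite opprK.
    by rewrite iterS.
  rewrite mulrN; lra.
split => //.
move=> F hF.
have gmin := Fgen_gameop o w hmin.
have gmax := Fgen_gameop o w hmax.
have [K1 hK1] := partA _ gmin.
have [K2 hK2] := partB _ gmax.
exists (Num.max K1 K2) => N v.
have c1 : iter N F (fun _ => 0) v <= iter N (Fgen o (adjMin t) w) (fun _ => 0) v.
  apply: (iter_cmp hF gmin) => v' u.
    by rewrite /adjMin => ->.
  by rewrite /adjMin => /negbTE -> /eqP ->.
have c2 : iter N (Fgen o (adjMax t) w) (fun _ => 0) v <= iter N F (fun _ => 0) v.
  apply: (iter_cmp gmax hF) => v' u.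
    by rewrite /adjMax => -> /eqP ->.
  by rewrite /adjMax => /negbTE ->.
have := hK1 N v; have := hK2 N v.
have m1 : K1 <= Num.max K1 K2 by rewrite le_max lexx.
have m2 : K2 <= Num.max K1 K2 by rewrite le_max lexx orbT.
rewrite ler_norml => h1 h2; apply/andP; split; lra.
Qed.

End MainGame.


Section Lim.
Variable R : realType.

Lemma lim_lin (a : nat -> R) (c K : R) :
  (forall N, `|a N - N%:R * c| <= K) -> limn (fun N => a N / N%:R) = c.
Proof.
move=> h; apply: cvg_lim; first exact: Rhausdorff.
apply/cvgrPdist_le => e e0.
near=> N.
have N1 : (1 <= N)%N by near: N; apply: nbhs_infty_ge.
have N0 : 0 < N%:R :> R by rewrite ltr0n.
have hK : K / e <= N%:R by near: N; apply: nbhs_infty_ger.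
have -> : c - a N / N%:R = - (a N - N%:R * c) / N%:R by field; rewrite gt_eqF.
rewrite normrM normrN normfV normr_nat ler_pdivrMr //.
apply: le_trans (h N) _.
by rewrite -ler_pdivrMl // mulrC.
Unshelve. all: by end_near.
Qed.

Lemma arch_le (d C : R) : (forall M : nat, M%:R * d <= C) -> d <= 0.
Proof.
move=> h; rewrite leNgt; apply/negP => d0.
have [M hM] : exists M : nat, C / d + 1 <= M%:R.
  have := nbhs_infty_ger (C / d + 1); case=> M _ hM; exists M; exact: (hM M (leqnn M)).
have := h M; have : (C / d + 1) * d <= M%:R * d by apply: ler_wpM2r; [exact: ltW | exact: hM].
have -> : (C / d + 1) * d = C + d by field; rewrite gt_eqF.
lra.
Qed.

End Lim.


Section Ereal.
Variable R : realType.

Lemma emin_attain (K : finType) (P : pred K) (f : K -> R) k0 : P k0 ->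
  exists2 k, P k & (\big[mine/+oo]_(k | P k) (f k)%:E = (f k)%:E)%E.
Proof.
move=> Pk0; have [i iP e] := @eq_bigmin _ _ K +oo%E k0 P (fun k => (f k)%:E) Pk0 (fun _ _ => leey _).
by exists i.
Qed.

Lemma emax_attain (K : finType) (P : pred K) (f : K -> R) k0 : P k0 ->
  exists2 k, P k & (\big[maxe/-oo]_(k | P k) (f k)%:E = (f k)%:E)%E.
Proof.
move=> Pk0; have [i iP e] := @eq_bigmax _ _ K -oo%E k0 P (fun k => (f k)%:E) Pk0 (fun _ _ => leNye _).
by exists i.
Qed.

End Ereal.

Section Concrete.
Variable R : realType.
Variables (I J : finType).
Local Notation X := (J + I)%type.

Definition oX (x : X) : bool := if x is inr _ then true else false.

Definition adjAB (A B : I -> J -> \bar R) : rel X := fun x y =>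
  match x, y with
  | inl j, inr k => A k j != -oo%E
  | inr k, inl l => B k l != -oo%E
  | _, _ => false
  end.

Definition wAB (A B : I -> J -> \bar R) : X -> X -> R := fun x y =>
  match x, y with
  | inl j, inr k => - fine (A k j)
  | inr k, inl l => fine (B k l)
  | _, _ => 0
  end.

Definition FAB (A B : I -> J -> \bar R) (y : X -> R) (x : X) : R :=
  match x with
  | inl j => fine (\big[mine/+oo]_(k | A k j != -oo) (- A k j + (y (inr k))%:E))%E
  | inr k => fine (\big[maxe/-oo]_(l | B k l != -oo) (B k l + (y (inl l))%:E))%E
  end.

Variables (A B : I -> J -> \bar R).
Hypothesis hAfin : forall k j, A k j != +oo%E.
Hypothesis hBfin : forall k l, B k l != +oo%E.
Hypothesis hAcol : forall j, exists k, A k j != -oo%E.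
Hypothesis hBrow : forall k, exists l, B k l != -oo%E.

Lemma Amin_eq (y : X -> R) j :
  (\big[mine/+oo]_(k | A k j != -oo) (- A k j + (y (inr k))%:E) =
   \big[mine/+oo]_(k | A k j != -oo) (- fine (A k j) + y (inr k))%:E)%E.
Proof.
apply: eq_bigr => k hk; move: hk (hAfin k j); case: (A k j) => [r| |] //= _ _.
Qed.

Lemma Bmax_eq (y : X -> R) k :
  (\big[maxe/-oo]_(l | B k l != -oo) (B k l + (y (inl l))%:E) =
   \big[maxe/-oo]_(l | B k l != -oo) (fine (B k l) + y (inl l))%:E)%E.
Proof.
apply: eq_bigr => l hl; move: hl (hBfin k l); case: (B k l) => [r| |] //= _ _.
Qed.

Lemma hadjAB : forall v, exists u, adjAB A B v u.
Proof.
case=> [j|k].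
  by have [k hk] := hAcol j; exists (inr k).
by have [l hl] := hBrow k; exists (inl l).
Qed.

Lemma FAB_gameop : gameop oX (adjAB A B) (wAB A B) (FAB A B).
Proof.
move=> y [j|k] /=.
- rewrite Amin_eq.
  have [k0 hk0] := hAcol j.
  have [k hk e] := emin_attain (P := fun k => A k j != -oo%E) (fun k => - fine (A k j) + y (inr k)) hk0.
  rewrite e /=; split; last by exists (inr k).
  case=> // k' hk'.
  have := @bigmin_le_cond _ _ _ +oo%E k' (fun k => A k j != -oo%E)
       (fun k => (- fine (A k j) + y (inr k))%:E) hk'.
  by rewrite e lee_fin.
- rewrite Bmax_eq.
  have [l0 hl0] := hBrow k.
  have [l hl e] := emax_attain (P := fun l => B k l != -oo%E) (fun l => fine (B k l) + y (inl l)) hl0.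
  rewrite e /=; split; last by exists (inl l).
  case=> // l' hl'.
  have := @le_bigmax_cond _ _ _ -oo%E l' (fun l => B k l != -oo%E)
       (fun l => (fine (B k l) + y (inl l))%:E) hl'.
  by rewrite e lee_fin.
Qed.

Lemma FF_minmax (y : X -> R) j :
  FAB A B (FAB A B y) (inl j) = minmax A B (fun l => y (inl l)) j.
Proof.
rewrite /minmax /=; congr fine; apply: eq_bigr => k hk; congr (_ + _)%E.
rewrite Bmax_eq; have [l0 hl0] := hBrow k.
by have [l hl ->] := emax_attain (P := fun l => B k l != -oo%E) (fun l => fine (B k l) + y (inl l)) hl0.
Qed.

Lemma orbit_eq N j : mm_orbit A B N j = iter N.*2 (FAB A B) (fun _ => 0) (inl j).
Proof.
elim: N j => [|N IH] j; first by [].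
rewrite doubleS !iterS FF_minmax /mm_orbit iterS; congr (minmax A B _ j).
by apply/funext => l; exact: IH.
Qed.

End Concrete.


Section Final.
Variable R : realType.
Variables (I J : finType).
Local Notation X := (J + I)%type.

Lemma gameop_ext (o : X -> bool) (adj1 adj2 : rel X) (w1 w2 : X -> X -> R) F :
  (forall v u, adj1 v u = adj2 v u) -> (forall v u, adj1 v u -> w1 v u = w2 v u) ->
  gameop o adj1 w1 F -> gameop o adj2 w2 F.
Proof.
move=> ha hw hF y v; have [h1 [u au e]] := hF y v; split.
  by case: (o v) h1 => h1 u' au'; rewrite -hw ?ha //; apply: h1; rewrite ha.
by exists u; rewrite -?ha // -hw.
Qed.

Lemma ct_from_bound (A B : I -> J -> \bar R)
  (hBfin : forall k l, B k l != +oo%E) (hBrow : forall k, exists l, B k l != -oo%E)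
  (eta : X -> R) K :
  (forall N v, `|iter N (FAB A B) (fun _ => 0) v - N%:R * eta v| <= K) ->
  forall j, cycle_time A B j = 2 * eta (inl j).
Proof.
move=> hK j; rewrite /cycle_time; apply: (@lim_lin _ _ _ K) => N.
rewrite (@orbit_eq _ _ _ A B hBfin hBrow).
have -> : N%:R * (2 * eta (inl j)) = (N.*2)%:R * eta (inl j) by rewrite -muln2 natrM mulrA.
exact: hK.
Qed.

Lemma ct_value (A B : I -> J -> \bar R)
  (hAfin : forall k j, A k j != +oo%E) (hBfin : forall k l, B k l != +oo%E)
  (hAcol : forall j, exists k, A k j != -oo%E) (hBrow : forall k, exists l, B k l != -oo%E) :
  exists (eta : X -> R) K,
    forall N v, `|iter N (FAB A B) (fun _ => 0) v - N%:R * eta v| <= K.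
Proof.
have [t [eta [_ _ _ hiv]]] := main_game (@oX I J) (hadjAB hAcol hBrow) (wAB A B).
have [K hK] := hiv _ (FAB_gameop hAfin hBfin hAcol hBrow).
by exists eta, K.
Qed.

Lemma eta_cmp (a b : nat -> R) (e1 e2 K1 K2 : R) :
  (forall N, a N <= b N) -> (forall N, N%:R * e1 - K1 <= a N) ->
  (forall N, b N <= N%:R * e2 + K2) -> e1 <= e2.
Proof.
move=> hab h1 h2; rewrite -subr_ge0 -oppr_le0 opprB.
apply: (@arch_le _ _ (K1 + K2)) => N.
have := hab N; have := h1 N; have := h2 N; rewrite mulrBr; lra.
Qed.

Lemma normb (x y K : R) : `|x - y| <= K -> y - K <= x /\ x <= y + K.
Proof. by rewrite ler_norml => /andP[]; lra. Qed.


Section Cmp.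
Variables (A B : I -> J -> \bar R).
Hypothesis hAfin : forall k j, A k j != +oo%E.
Hypothesis hBfin : forall k l, B k l != +oo%E.
Hypothesis hAcol : forall j, exists k, A k j != -oo%E.
Hypothesis hBrow : forall k, exists l, B k l != -oo%E.
Variable eta : X -> R.
Variable K : R.
Hypothesis hK : forall N v, `|iter N (FAB A B) (fun _ => 0) v - N%:R * eta v| <= K.

Lemma tau_cmp (tau : {ffun J -> I}) : is_min_strategy A tau ->
  exists eta' : X -> R, [/\ (forall j, cycle_time (restr_min A tau) B j = 2 * eta' (inl j)),
    (forall v, eta v <= eta' v) &
    exists K', forall N v, `|iter N (FAB (restr_min A tau) B) (fun _ => 0) v - N%:R * eta' v| <= K'].
Proof.
move=> /forallP vtau.
set A' := restr_min A tau.
have hA'fin : forall k j, A' k j != +oo%E by move=> k j; rewrite /A' /restr_min; case: ifP.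
have hA'col : forall j, exists k, A' k j != -oo%E.
  by move=> j; exists (tau j); rewrite /A' /restr_min eqxx.
have [eta' [K' hK']] := ct_value hA'fin hBfin hA'col hBrow.
have ct' := ct_from_bound hBfin hBrow hK'.
have hF := FAB_gameop hAfin hBfin hAcol hBrow.
have hF' := FAB_gameop hA'fin hBfin hA'col hBrow.
have hF'w : gameop (@oX I J) (adjAB A' B) (wAB A B) (FAB A' B).
  apply: gameop_ext hF' => // -[j|k] [l|k'] //=.
  by rewrite /A' /restr_min; case: ifP.
have cmp : forall N v, iter N (FAB A B) (fun _ => 0) v <= iter N (FAB A' B) (fun _ => 0) v.
  move=> N v; apply: (iter_cmp hF hF'w).
    by move=> [j|k] u //= _.
  move=> [j|k] [l|k'] //= _.
  by rewrite /A' /restr_min; case: ifP => //; rewrite eqxx.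
exists eta'; split => //; last by exists K'.
move=> v; apply: (@eta_cmp (fun N => iter N (FAB A B) (fun _ => 0) v)
   (fun N => iter N (FAB A' B) (fun _ => 0) v) _ _ K K').
- by move=> N; exact: cmp.
- by move=> N; have [h _] := normb (hK N v).
- by move=> N; have [_ h] := normb (hK' N v).
Qed.

Lemma sig_cmp (sig : {ffun I -> J}) : is_max_strategy B sig ->
  exists eta' : X -> R, [/\ (forall j, cycle_time A (restr_max B sig) j = 2 * eta' (inl j)),
    (forall v, eta' v <= eta v) &
    exists K', forall N v, `|iter N (FAB A (restr_max B sig)) (fun _ => 0) v - N%:R * eta' v| <= K'].
Proof.
move=> /forallP vsig.
set B' := restr_max B sig.
have hB'fin : forall k l, B' k l != +oo%E by move=> k l; rewrite /B' /restr_max; case: ifP.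
have hB'row : forall k, exists l, B' k l != -oo%E.
  by move=> k; exists (sig k); rewrite /B' /restr_max eqxx.
have [eta' [K' hK']] := ct_value hAfin hB'fin hAcol hB'row.
have ct' := ct_from_bound hB'fin hB'row hK'.
have hF := FAB_gameop hAfin hBfin hAcol hBrow.
have hF' := FAB_gameop hAfin hB'fin hAcol hB'row.
have hF'w : gameop (@oX I J) (adjAB A B') (wAB A B) (FAB A B').
  apply: gameop_ext hF' => // -[j|k] [l|k'] //=.
  by rewrite /B' /restr_max; case: ifP.
have cmp : forall N v, iter N (FAB A B') (fun _ => 0) v <= iter N (FAB A B) (fun _ => 0) v.
  move=> N v; apply: (iter_cmp hF'w hF).
    move=> [j|k] [l|k'] //= _.
    by rewrite /B' /restr_max; case: ifP => //; rewrite eqxx.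
  by move=> [j|k] u.
exists eta'; split => //; last by exists K'.
move=> v; apply: (@eta_cmp (fun N => iter N (FAB A B') (fun _ => 0) v)
   (fun N => iter N (FAB A B) (fun _ => 0) v) _ _ K' K).
- by move=> N; exact: cmp.
- by move=> N; have [h _] := normb (hK' N v).
- by move=> N; have [_ h] := normb (hK N v).
Qed.

End Cmp.

End Final.


Section Gen.
Variable R : realType.
Variables (I J : finType).
Local Notation X := (J + I)%type.
Variables (A B : I -> J -> \bar R).
Hypothesis hAfin : forall k j, A k j != +oo%E.
Hypothesis hBfin : forall k l, B k l != +oo%E.
Hypothesis hAcol : forall j, exists k, A k j != -oo%E.
Hypothesis hBrow : forall k, exists l, B k l != -oo%E.
Variables (i0 : I) (j0 : J).

Theorem generic_prop :
  (\big[mine/+oo]_(t : {ffun J -> I} | is_min_strategy A t) Phi (restr_min A t) B = Phi A B /\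
  Phi A B = \big[maxe/-oo]_(s : {ffun I -> J} | is_max_strategy B s) Phi A (restr_max B s))%E.
Proof.
have hadj := hadjAB hAcol hBrow.
have hF := FAB_gameop hAfin hBfin hAcol hBrow.
have [t [eta [vt hminG hmaxG hG]]] := main_game (@oX I J) hadj (wAB A B).
have [K hK] := hG _ hF.
have ctAB := ct_from_bound hBfin hBrow hK.
pose tau := [ffun j => if t (inl j) is inr k then k else i0].
have htau : forall j, t (inl j) = inr (tau j) /\ A (tau j) j != -oo%E.
  move=> j; rewrite ffunE; have := vt (inl j); case: (t (inl j)) => [l|k] //= hk.
pose sig := [ffun k => if t (inr k) is inl l then l else j0].
have hsig : forall k, t (inr k) = inl (sig k) /\ B k (sig k) != -oo%E.
  move=> k; rewrite ffunE; have := vt (inr k); case: (t (inr k)) => [l|k'] //= hk.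
have vtau : is_min_strategy A tau by apply/forallP => j; have [] := htau j.
have vsig : is_max_strategy B sig by apply/forallP => k; have [] := hsig k.
split.
-
  have PhiT : Phi (restr_min A tau) B = Phi A B.
    have [eta' [ct' le' [K' hK']]] := tau_cmp hAfin hBfin hAcol hBrow hK vtau.
    set A' := restr_min A tau.
    have hA'fin : forall k j, A' k j != +oo%E by move=> k j; rewrite /A' /restr_min; case: ifP.
    have hA'col : forall j, exists k, A' k j != -oo%E.
      by move=> j; exists (tau j); rewrite /A' /restr_min eqxx; have [] := htau j.
    have hF' := FAB_gameop hA'fin hBfin hA'col hBrow.
    have hFadj : gameop (@oX I J) (adjMin (@oX I J) (adjAB A B) t) (wAB A B) (FAB A' B).
      apply: (gameop_ext _ _ hF').
        move=> [j|k] u; rewrite /adjMin //=.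
        have [e hk] := htau j; rewrite e.
        case: u => [l|k] //=.
        rewrite /A' /restr_min; case: (k =P tau j) => [->|ne]; first by rewrite hk eqxx.
        have -> : (inr k == inr (tau j) :> X) = (k == tau j) by [].
        by move/eqP/negbTE: ne => ->; rewrite eqxx.
      move=> [j|k] [l|k'] //=.
      by rewrite /A' /restr_min; case: ifP.
    have [K1 hK1] := hminG _ hFadj.
    have ge' : forall v, eta' v <= eta v.
      move=> v; apply: (eta_cmp (a := fun N => iter N (FAB A' B) (fun _ => 0) v)
         (b := fun N => iter N (FAB A' B) (fun _ => 0) v) (K1 := K') (K2 := K1)) => // N.
      by have [h _] := normb (hK' N v).
    rewrite /Phi; apply: eq_bigr => j _; rewrite ct' ctAB.
    have e : eta' (inl j) = eta (inl j) by apply/le_anti; rewrite le' ge'.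
    by rewrite e.
  apply/eqP; rewrite eq_le; apply/andP; split.
    by rewrite -PhiT; apply: bigmin_le_cond.
  apply: le_bigmin; first exact: leey.
  move=> tau' vtau'.
  have [eta' [ct' le' _]] := tau_cmp hAfin hBfin hAcol hBrow hK vtau'.
  rewrite /Phi; apply: le_bigmin2 => j _; rewrite ct' ctAB lee_fin.
  by apply: ler_wpM2l => //; exact: le'.
-
  have PhiS : Phi A (restr_max B sig) = Phi A B.
    have [eta' [ct' le' [K' hK']]] := sig_cmp hAfin hBfin hAcol hBrow hK vsig.
    set B' := restr_max B sig.
    have hB'fin : forall k l, B' k l != +oo%E by move=> k l; rewrite /B' /restr_max; case: ifP.
    have hB'row : forall k, exists l, B' k l != -oo%E.
      by move=> k; exists (sig k); rewrite /B' /restr_max eqxx; have [] := hsig k.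
    have hF' := FAB_gameop hAfin hB'fin hAcol hB'row.
    have hFadj : gameop (@oX I J) (adjMax (@oX I J) (adjAB A B) t) (wAB A B) (FAB A B').
      apply: (gameop_ext _ _ hF').
        move=> [j|k] u; rewrite /adjMax //=.
        have [e hk] := hsig k; rewrite e.
        case: u => [l|k'] //=.
        rewrite /B' /restr_max; case: (l =P sig k) => [->|ne]; first by rewrite hk eqxx.
        have -> : (inl l == inl (sig k) :> X) = (l == sig k) by [].
        by move/eqP/negbTE: ne => ->; rewrite eqxx.
      move=> [j|k] [l|k'] //=.
      by rewrite /B' /restr_max; case: ifP.
    have [K1 hK1] := hmaxG _ hFadj.
    have ge' : forall v, eta v <= eta' v.
      move=> v; apply: (eta_cmp (a := fun N => iter N (FAB A B') (fun _ => 0) v)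
         (b := fun N => iter N (FAB A B') (fun _ => 0) v) (K1 := K1) (K2 := K')) => // N.
      by have [_ h] := normb (hK' N v).
    rewrite /Phi; apply: eq_bigr => j _; rewrite ct' ctAB.
    have e : eta' (inl j) = eta (inl j) by apply/le_anti; rewrite le' ge'.
    by rewrite e.
  apply/eqP; rewrite eq_le; apply/andP; split.
    by rewrite -{1}PhiS; apply: le_bigmax_cond.
  apply: bigmax_le; first exact: leNye.
  move=> sig' vsig'.
  have [eta' [ct' le' _]] := sig_cmp hAfin hBfin hAcol hBrow hK vsig'.
  rewrite /Phi; apply: le_bigmin2 => j _; rewrite ct' ctAB lee_fin.
  by apply: ler_wpM2l => //; exact: le'.
Qed.

End Gen.

Local Open Scope ereal_scope.

Theorem proposition5 (R : realType) (m n : nat)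
  (U V : 'I_m -> 'I_n -> \bar R) (b d : 'I_m -> \bar R)
  (p : 'I_n -> \bar R) (q : 'I_n -> \bar R)
  (hU : forall i j, U i j != +oo) (hV : forall i j, V i j != +oo)
  (hb : forall i, b i != +oo) (hd : forall i, d i != +oo)
  (hp : forall j, p j != +oo) (hq : forall j, q j != -oo)
  (hA : forall j, exists i, Amat U b p q i j != -oo)
  (hB : forall (lam : R) i, exists j, Bmat V d lam i j != -oo)
  (lam : R) :
  \big[mine/+oo]_(t : {ffun ('I_n + unit)%type -> ('I_m + 'I_n + unit)%type}
                   | is_min_strategy (Amat U b p q) t)
     Phi (restr_min (Amat U b p q) t) (Bmat V d lam)
  = Phi (Amat U b p q) (Bmat V d lam)
  /\
  Phi (Amat U b p q) (Bmat V d lam)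
  = \big[maxe/-oo]_(s : {ffun ('I_m + 'I_n + unit)%type -> ('I_n + unit)%type}
                   | is_max_strategy (Bmat V d lam) s)
     Phi (Amat U b p q) (restr_max (Bmat V d lam) s).
Proof.
apply: (generic_prop _ _ (hA) (hB lam) (inr tt) (inr tt)).
- move=> [[k|k]|[]] [l|[]] //=.
  by case: (q l) (hq l).
- move=> [[k|k]|[]] [l|[]] //=.
  by case: ifP.
Qed.
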